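(* Let $n\ge1$, $w\in\mathbb{R}^n$ with $w\neq0$, and $\lambda>0$. Let $(\alpha^*,b^* )$ be a minimizer of $$\min_{\alpha>0,\; b\in\{-1,0,1\}^n}\; \tfrac12\sum_{i=1}^n \lambda(\alpha b_i - w_i)^2,$$ and set $\Delta^*=\alpha^*/2$. Then the set $S=\{i: |w_i|>\Delta^*\}$ is nonempty, $$\alpha^*=\frac{1}{|S|}\sum_{i\in S}|w_i|,$$ and $\Delta^*$ is a maximizer, over $\Delta\in(0,\max_i|w_i|)$, of $$F(\Delta)=\frac{1}{|\{i:|w_i|>\Delta\}|}\Big(\sum_{i:\,|w_i|>\Delta}|w_i|\Big)^2 .$$ That is, $\alpha^*$ coincides with the ternary-weight-network scaling with threshold $\Delta^*=\alpha^*/2$.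
   Context: This is the case of a layer-wise loss-aware ternarization problem $\min \tfrac12\|\alpha b-w\|_{D}^2$ in which the diagonal curvature matrix is $D=\lambda I$. *)

(* Defs.v *)
From mathcomp Require Import all_boot all_order all_algebra.
From mathcomp Require Import reals.
Set Implicit Arguments. Unset Strict Implicit. Unset Printing Implicit Defensive.
Import Order.TTheory GRing.Theory Num.Theory.
Local Open Scope ring_scope.

Section LossAwareTernary.
Variables (R : realType) (n : nat).

Definition ternary (x : R) : bool := [|| x == -1, x == 0 | x == 1].

Definition lat_obj (lam : R) (w : 'rV[R]_n) (a : R) (b : 'rV[R]_n) : R :=
  2^-1 * \sum_(i < n) lam * (a * b ord0 i - w ord0 i) ^+ 2.

Definition is_minimizer (lam : R) (w : 'rV[R]_n) (a : R) (b : 'rV[R]_n) : Prop :=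
  [/\ 0 < a, (forall i, ternary (b ord0 i)) &
      forall (a' : R) (b' : 'rV[R]_n), 0 < a' -> (forall i, ternary (b' ord0 i)) ->
        lat_obj lam w a b <= lat_obj lam w a' b'].

Definition supp (w : 'rV[R]_n) (D : R) : {set 'I_n} := [set i | D < `|w ord0 i|].

Definition twn_F (w : 'rV[R]_n) (D : R) : R :=
  (\sum_(i in supp w D) `|w ord0 i|) ^+ 2 / (#|supp w D|)%:R.

Definition maxabs (w : 'rV[R]_n) : R := \big[Num.max/0]_(i < n) `|w ord0 i|.

End LossAwareTernary.

(* Main.v *)
Require Import Defs.
From mathcomp Require Import all_boot all_order all_algebra.
From mathcomp Require Import reals.
From mathcomp Require Import ring lra.
Import Order.TTheory GRing.Theory Num.Theory.
Local Open Scope ring_scope.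
Set Implicit Arguments. Unset Strict Implicit.

Section Helpers.
Variables (R : realType) (n : nat) (w : 'rV[R]_n) (lam : R).

Definition bT (T : {set 'I_n}) : 'rV[R]_n :=
  \row_i (if i \in T then Num.sg (w ord0 i) else 0).

Lemma bT_tern T i : ternary (bT T ord0 i).
Proof.
rewrite /ternary mxE; case: (i \in T); last by rewrite eqxx orbT.
by case: sgrP; rewrite eqxx ?orbT.
Qed.

Lemma term_opt (a x y : R) : 0 < a -> ternary y ->
  (a * (if a / 2 < `|x| then Num.sg x else 0) - x) ^+ 2 <= (a * y - x) ^+ 2.
Proof.
move=> a0 /or3P [/eqP->|/eqP->|/eqP->];
(case: (lerP 0 x) => hx; [rewrite (ger0_norm hx)|rewrite (ltr0_norm hx)]);
(case: ifP => h; [|rewrite mulr0]); rewrite ?(gtr0_sg (lt_le_trans (_ : 0 < a/2) (ltW h))) ?(ltr0_sg hx) ?mulr0 ?mulr1 ?mulrN1;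
try (move/negbT: h; rewrite -leNgt => h); try nra.
all: have ha2 : 0 < a / 2 by lra.
all: try (rewrite gtr0_sg; [nra|lra]).
Qed.

Lemma obj_opt a (b : 'rV[R]_n) : 0 < lam -> 0 < a -> (forall i, ternary (b ord0 i)) ->
  lat_obj lam w a (bT (supp w (a / 2))) <= lat_obj lam w a b.
Proof.
move=> l0 a0 tb; rewrite /lat_obj ler_pM2l ?invr_gt0 ?ltr0n //.
apply: ler_sum => i _; rewrite ler_pM2l // mxE inE.
exact: term_opt.
Qed.

Lemma obj_bT a (T : {set 'I_n}) : (forall i, i \in T -> w ord0 i != 0) ->
  lat_obj lam w a (bT T) = 2^-1 * (\sum_i lam * w ord0 i ^+ 2
     - lam * (2 * a * \sum_(i in T) `|w ord0 i| - #|T|%:R * a ^+ 2)).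
Proof.
move=> hT; rewrite /lat_obj; congr (_ * _).
have E i : lam * (a * bT T ord0 i - w ord0 i) ^+ 2 = lam * w ord0 i ^+ 2
   - (if i \in T then lam * (2 * a * `|w ord0 i| - a ^+ 2) else 0).
  rewrite mxE; case: ifP => iT; last by rewrite mulr0 add0r sqrrN subr0.
  have h1 : Num.sg (w ord0 i) * w ord0 i = `|w ord0 i| by rewrite -normrEsg.
  have h2 : Num.sg (w ord0 i) ^+ 2 = 1 by rewrite sqr_sg hT.
  transitivity (lam * w ord0 i ^+ 2 - lam * (2 * a * (Num.sg (w ord0 i) * w ord0 i)
     - a ^+ 2 * Num.sg (w ord0 i) ^+ 2)); first ring.
  by rewrite h1 h2 mulr1.
under eq_bigr => i _ do rewrite E.
rewrite sumrB; congr (_ - _).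
rewrite -big_mkcond /= -mulr_sumr sumrB -mulr_sumr sumr_const.
by rewrite -[a ^+ 2 *+ #|T|]mulr_natl.
Qed.

End Helpers.

Theorem corollary1 (R : realType) (n : nat) (w : 'rV[R]_n) (lam : R)
    (astar : R) (bstar : 'rV[R]_n) :
  (0 < n)%N -> w != 0 -> 0 < lam ->
  is_minimizer lam w astar bstar ->
  [/\ supp w (astar / 2) != set0,
      astar = (\sum_(i in supp w (astar / 2)) `|w ord0 i|) / (#|supp w (astar / 2)|)%:R,
      0 < astar / 2 < maxabs w &
      forall D : R, 0 < D < maxabs w -> twn_F w D <= twn_F w (astar / 2)].
Proof.
move=> n0 w0 l0 [a0 tb hmin].
set T0 := supp w (astar / 2).
have nzsupp D : 0 <= D -> forall i, i \in supp w D -> w ord0 i != 0.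
  move=> D0 i; rewrite inE => h; rewrite -normr_gt0; exact: le_lt_trans h.
have ha0 : 0 <= astar / 2 by lra.
have c1 : lat_obj lam w astar (bT w T0) <= lat_obj lam w astar bstar.
  exact: obj_opt.
set Q := \sum_i lam * w ord0 i ^+ 2.
have hle a (T : {set 'I_n}) : 0 < a -> (forall i, i \in T -> w ord0 i != 0) ->
   lam * (2 * a * \sum_(i in T) `|w ord0 i| - #|T|%:R * a ^+ 2) <=
   lam * (2 * astar * \sum_(i in T0) `|w ord0 i| - #|T0|%:R * astar ^+ 2).
  move=> a1 hT.
  have := le_trans c1 (hmin a (bT w T) a1 (bT_tern w T)).
  rewrite !obj_bT //; last exact: nzsupp.
  rewrite ler_pM2l ?invr_gt0 ?ltr0n // lerD2l lerN2 //.
have T0n : T0 != set0.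
  apply/negP => /eqP T0e.
  have [j wj] : exists j, w ord0 j != 0.
    apply/existsP; move: w0; apply: contraR; rewrite negb_exists => /forallP h.
    apply/eqP/rowP => j; rewrite mxE; have := h j; by rewrite negbK => /eqP.
  have hj : 0 < `|w ord0 j| by rewrite normr_gt0.
  have H : forall i, i \in [set j] -> w ord0 i != 0 by move=> i; rewrite inE => /eqP->.
  have := hle _ _ hj H.
  rewrite T0e big_set1 cards1 big_set0 cards0.
  rewrite !(mulr0, mul0r, mul1r, subr0) => h.
  have : 0 < lam * (`|w ord0 j| * `|w ord0 j|) by rewrite !mulr_gt0.
  nra.
have kpos (T : {set 'I_n}) : T != set0 -> 0 < (#|T|%:R : R).
  by move=> h; rewrite ltr0n card_gt0.
have spos D (T := supp w D) : 0 <= D -> T != set0 -> 0 < \sum_(i in T) `|w ord0 i|.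
  move=> D0 /set0Pn [i iT]; rewrite (bigD1 i) //=.
  have : 0 < `|w ord0 i| by rewrite normr_gt0 (nzsupp D).
  have : 0 <= \sum_(j in T | j != i) `|w ord0 j| by apply: sumr_ge0.
  lra.
set k := (#|T0|%:R : R); set s := \sum_(i in T0) `|w ord0 i|.
have k0 : 0 < k by apply: kpos.
have s0 : 0 < s by apply: spos.
have val (a : R) (kk ss : R) : 0 < kk -> 2 * (ss / kk) * ss - kk * (ss / kk) ^+ 2 = ss ^+ 2 / kk.
  by move=> hk; field; rewrite gt_eqF.
have c2 : astar = s / k.
  have := hle (s / k) T0 (divr_gt0 s0 k0) (nzsupp _ ha0).
  rewrite -/k -/s val //.
  move=> h.
  have hs : s = k * (s / k) by field; rewrite gt_eqF.
  set m := s / k in hs h *; clearbody m.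
  have : (astar - m) ^+ 2 <= 0.
    have lk : 0 < lam * k by apply: mulr_gt0.
    have e1 : s ^+ 2 / k = k * m ^+ 2 by rewrite hs; field; rewrite gt_eqF.
    rewrite e1 in h; rewrite {1}hs in h.
    have e2 : lam * k * (astar - m) ^+ 2 = lam * (k * m ^+ 2) - lam * (2 * astar * (k * m) - k * astar ^+ 2) by ring.
    by rewrite -(pmulr_rle0 _ lk) e2 subr_le0.
  move=> h2; apply/eqP; rewrite -subr_eq0 -sqrf_eq0 eq_le h2 sqr_ge0 //.
split => //.
- apply/andP; split; first lra.
  case/set0Pn: T0n => i; rewrite inE => hi.
  apply: (lt_le_trans hi); rewrite /maxabs.
  exact: (le_bigmax _ (fun i => `|w ord0 i|) i).
move=> D /andP [D0 Dm].
have TDn : supp w D != set0.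
  apply/negP => /eqP TDe.
  suff : maxabs w <= D by lra.
  apply: bigmax_le; first exact: ltW.
  move=> i _; rewrite leNgt; apply/negP => hi.
  have : i \in supp w D by rewrite inE.
  by rewrite TDe inE.
have kD := kpos _ TDn.
have sD := spos D (ltW D0) TDn.
have := hle _ _ (divr_gt0 sD kD) (nzsupp _ (ltW D0)).
have key : 2 * astar * s - k * astar ^+ 2 = s ^+ 2 / k.
  by move: (val astar k s k0); rewrite -c2.
rewrite val // -/k -/s key ler_pM2l // /twn_F.
Qed.
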